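(* Let $q=2^f$ with $f\ge4$, let $q_0<q$ be a power of $2$ with $\gcd(q-1,q_0^2-1)=1$, let $u\in\mathbb{F}_q\setminus\{0,1\}$, and define $\eta=1+\left(\frac{u}{u+1}\right)^{1/(q_0-1)}$. Then for all $a,b\in\mathbb{F}_q^*$: (1) $\Phi_{a,ua^{q_0+1}}\xrightarrow{u}\Phi_{b,ub^{q_0+1}}$ iff $b=a/\eta$; (2) $\Phi_{a,ua^{q_0+1}}\xrightarrow{u+1}\Phi_{b,ub^{q_0+1}}$ iff $b=a\eta$; (3) $\Phi_{a,(u+1)a^{q_0+1}}\xrightarrow{u}\Phi_{b,(u+1)b^{q_0+1}}$ iff $b=a\cdot\frac{\eta}{1+\eta}$; (4) $\Phi_{a,(u+1)a^{q_0+1}}\xrightarrow{u+1}\Phi_{b,(u+1)b^{q_0+1}}$ iff $b=a\cdot\frac{1+\eta}{\eta}$; (5) $\Phi_{a,ua^{q_0+1}}\xrightarrow{u}\Phi_{b,(u+1)b^{q_0+1}}$ iff $b=\frac{a}{1+\eta}$; (6) $\Phi_{a,ua^{q_0+1}}\xrightarrow{u+1}\Phi_{b,(u+1)b^{q_0+1}}$ iff $\left(\frac ab\right)^{q_0+1}+u\left(\frac ab\right)^{q_0}+(u+1)\frac ab+1=0$.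
   Context: For $a,c\in\mathbb{F}_q$ let $\Phi_{a,c}=\begin{bmatrix}1&0&0\\ a&1&0\\ c&a^{q_0}&1\end{bmatrix}$, $K=\{\Phi_{a,c}\}\le GL(3,\mathbb{F}_q)$, and for $v\in\mathbb{F}_q$ let $\Omega_v=\{\Phi_{a,va^{q_0+1}}: a\in\mathbb{F}_q^*\}$. For $x,y\in K$ and $v\in\mathbb{F}_q$ write $x\xrightarrow{v}y$ if $xy^{-1}\in\Omega_v$. The $(q_0-1)$-th root is the inverse of the bijection $x\mapsto x^{q_0-1}$ of $\mathbb{F}_q$ (a bijection since $\gcd(q_0-1,q-1)=1$). *)

(* Defs.v *)
From HB Require Import structures.
From mathcomp Require Import all_boot all_order all_algebra.
Set Implicit Arguments. Unset Strict Implicit. Unset Printing Implicit Defensive.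
Import GRing.Theory.
Local Open Scope ring_scope.

Section Defs.
Variable F : finFieldType.

Definition Phi (q0 : nat) (a c : F) : 'M[F]_3 :=
  \matrix_(i < 3, j < 3)
    if (i == j :> nat) then 1
    else if (i == 1%N :> nat) && (j == 0%N :> nat) then a
    else if (i == 2%N :> nat) && (j == 0%N :> nat) then c
    else if (i == 2%N :> nat) && (j == 1%N :> nat) then a ^+ q0
    else 0.

Definition Omega (q0 : nat) (v : F) : {set 'M[F]_3} :=
  [set Phi q0 a (v * a ^+ (q0 + 1)) | a in [set a : F | a != 0]].

Definition arrow (q0 : nat) (v : F) (x y : 'M[F]_3) : bool :=
  x * y^-1 \in Omega q0 v.

(* n-th root: the inverse of the map x |-> x^n (meaningful when this map is
   a bijection of F, as for n = q0 - 1 under the hypotheses). *)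
Definition root_pow (n : nat) (x : F) : F :=
  odflt 0 [pick y : F | y ^+ n == x].
End Defs.

(* Main.v *)
Require Import Defs.
From HB Require Import structures.
From mathcomp Require Import all_boot all_order all_algebra all_field.
From mathcomp Require Import ring zify.
Import GRing.Theory.
Local Open Scope ring_scope.

Section R.
Variable F : finFieldType.

Lemma pow_inj {n : nat} : (0 < n)%N -> coprime n (#|F|.-1) -> injective (fun x : F => x ^+ n).
Proof.
move=> n0 co x y /= E.
have nF : (n == 0%N) = false by case: n n0 {co E}.
case: (eqVneq y 0) => [y0|y0].
  move: E; rewrite y0 expr0n nF => /eqP; rewrite expf_eq0 n0 /=; exact/eqP.
set z := x / y.
have xz : x = z * y by rewrite /z divfK.
have zn : z ^+ n = 1 by rewrite /z exprMn exprVn E divff // expf_neq0.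
have z0 : z != 0.
  apply/eqP => z0; move: zn; rewrite z0 expr0n nF => /eqP; rewrite eq_sym oner_eq0 //.
have zm : z ^+ #|F|.-1 = 1.
  have cF : (0 < #|F|)%N by apply/card_gt0P; exists 0.
  have := expf_card z; rewrite -(prednK cF) exprS => E'.
  by apply: (mulfI z0); rewrite E' mulr1.
case: (Bezoutl #|F|.-1 n0) => k _ dv.
rewrite (eqP co) in dv.
have : z ^+ (1 + k * #|F|.-1) = 1.
  by rewrite -(divnK dv) mulnC exprM zn expr1n.
rewrite exprD expr1 mulnC exprM zm expr1n mulr1 => z1.
by rewrite xz z1 mul1r.
Qed.

Lemma root_powP n (x : F) : (0 < n)%N -> coprime n (#|F|.-1) ->
  forall y, y ^+ n = x <-> y = root_pow n x.
Proof.
move=> n0 co.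
have inj := pow_inj n0 co.
have rP : root_pow n x ^+ n = x.
  rewrite /root_pow; case: pickP => [y /eqP //|H].
  have /codomP [y xE] := injF_onto inj x.
  by have := H y; rewrite xE /= eqxx.
move=> y; split => [E|->] //.
by apply: inj; rewrite /= rP.
Qed.
End R.

Section C.
Variable F : finFieldType.
Variable q0 : nat.
Hypothesis q1 : (1 < q0)%N.
Hypothesis two0 : (2 : F) = 0.
Hypothesis frob : forall x y : F, (x + y) ^+ q0 = x ^+ q0 + y ^+ q0.
Let q0pos : (0 < q0)%N := ltnW q1.

Lemma addxx (x : F) : x + x = 0.
Proof. by rewrite -mulr2n -mulr_natl two0 mul0r. Qed.

Lemma PhiM (a c b d : F) :
  Phi q0 a c * Phi q0 b d = Phi q0 (a + b) (c + a ^+ q0 * b + d).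
Proof.
rewrite -mulmxE; apply/matrixP => i j.
rewrite !mxE !big_ord_recl big_ord0 !mxE.
case: i => [[|[|[|i]]] //= Hi]; case: j => [[|[|[|j]]] //= Hj]; rewrite ?frob; ring.
Qed.

Lemma Phi00 : Phi q0 (0 : F) 0 = 1.
Proof.
apply/matrixP => i j; rewrite !mxE expr0n; have -> : (q0 == 0%N) = false by case: q0 q0pos.
by case: i => [[|[|[|i]]] //= Hi]; case: j => [[|[|[|j]]] //= Hj].
Qed.

Lemma PhiV (b d : F) : (Phi q0 b d)^-1 = Phi q0 b (d + b ^+ (q0 + 1)).
Proof.
have H : Phi q0 b d * Phi q0 b (d + b ^+ (q0 + 1)) = 1.
  by rewrite PhiM addxx addn1 exprSr addxx Phi00.
have U : Phi q0 b d \is a GRing.unit.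
  by rewrite -mulmxE in H; case: (mulmx1_unit H).
by rewrite -[RHS]mul1r -(mulVr U) -mulrA H mulr1.
Qed.

Lemma Phi_inj (a c a' c' : F) : Phi q0 a c = Phi q0 a' c' -> a = a' /\ c = c'.
Proof.
move=> /matrixP E; split.
  by have := E (@Ordinal 3 1 isT) (@Ordinal 3 0 isT); rewrite !mxE.
by have := E (@Ordinal 3 2 isT) (@Ordinal 3 0 isT); rewrite !mxE.
Qed.

Lemma arrowP (v a c b d : F) :
  arrow q0 v (Phi q0 a c) (Phi q0 b d) <->
  (a + b != 0 /\ c + d + b ^+ (q0 + 1) + a ^+ q0 * b = v * (a + b) ^+ (q0 + 1)).
Proof.
rewrite /arrow /Omega PhiV PhiM.
have -> : c + a ^+ q0 * b + (d + b ^+ (q0 + 1)) = c + d + b ^+ (q0 + 1) + a ^+ q0 * b.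
  ring.
split.
  case/imsetP => x; rewrite inE => x0 /Phi_inj [ax cx]; rewrite cx ax; by split.
case=> nz E; apply/imsetP; exists (a + b); first by rewrite inE.
by rewrite E.
Qed.
Variables u r : F.
Hypothesis u0 : u != 0.
Hypothesis u1 : u + 1 != 0.
Hypothesis rootP : forall y, y ^+ (q0 - 1) = u / (u + 1) <-> y = r.

Lemma ch2 {X Y Z W K : F} : X + Y = Z + W + 2 * K -> (X = Y <-> Z = W).
Proof.
rewrite two0 mul0r addr0 => E.
have xx : forall x : F, x + x = 0 by move=> x; rewrite -mulr2n -mulr_natl two0 mul0r.
have eq0 : forall x y : F, x = y <-> x + y = 0.
  move=> x y; split => [->|h]; first exact: xx.
  by rewrite -[x]addr0 -(xx y) addrA h add0r.
by rewrite eq0 E -eq0.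
Qed.

Lemma rr : r ^+ (q0 - 1) = u / (u + 1).
Proof. by apply/rootP. Qed.

Lemma udiv_neq0 : u / (u + 1) != 0.
Proof. by rewrite mulf_neq0 ?invr_neq0. Qed.

Lemma udiv_neq1 : u / (u + 1) != 1.
Proof.
apply/eqP => E.
have : u = u + 1 by rewrite -{1}(divfK u1 u) E mul1r.
by rewrite -{1}[u]addr0 => /addrI /eqP; rewrite eq_sym oner_eq0.
Qed.

Lemma r0 : r != 0.
Proof.
apply/eqP => E; have := rr; rewrite E expr0n.
have -> : (q0 - 1 == 0)%N = false by case: q0 q1 => [|[|]].
by move=> /esym /eqP; rewrite (negbTE udiv_neq0).
Qed.

Lemma rn1 : r != 1.
Proof.
apply/eqP => E; have := rr; rewrite E expr1n.
by move=> /esym /eqP; rewrite (negbTE udiv_neq1).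
Qed.

Lemma stdP w : w != 0 -> ((u + 1) * w ^+ q0 = u * w <-> w = r).
Proof.
move=> w0; rewrite -rootP.
have wq : w ^+ q0 = w ^+ (q0 - 1) * w by rewrite -exprSr subn1 prednK // ltnW.
split => [E | E].
  have E2 : (u + 1) * w ^+ (q0 - 1) = u.
    by apply: (mulIf w0); rewrite -mulrA -wq E.
  by rewrite -[in LHS](mulKf u1 (w ^+ (q0 - 1))) E2 mulrC.
by rewrite wq E; field.
Qed.

Lemma stdP' w : (w != 0 /\ (u + 1) * w ^+ q0 = u * w) <-> w = r.
Proof.
split => [[w0 /(stdP _ w0)] // | E].
have w0 : w != 0 by rewrite E r0.
by split => //; apply/(stdP _ w0).
Qed.

Lemma mulK_iff (X Y K : F) : K != 0 -> (X = Y <-> X * K = Y * K).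
Proof. by move=> K0; split => [->//|]; apply: mulIf. Qed.

Lemma stdfrac p q : q != 0 ->
  ((u + 1) * (p / q) ^+ q0 = u * (p / q) <-> (u + 1) * p ^+ q0 * q = u * p * q ^+ q0).
Proof.
move=> qn0.
have K : q ^+ q0 * q != 0 by rewrite mulf_neq0 ?expf_neq0.
rewrite expr_div_n (mulK_iff _ _ _ K).
have qq : q ^+ q0 != 0 by rewrite expf_neq0.
have -> : (u + 1) * (p ^+ q0 / q ^+ q0) * (q ^+ q0 * q) = (u + 1) * p ^+ q0 * q.
  by field.
have -> : u * (p / q) * (q ^+ q0 * q) = u * p * q ^+ q0.
  by field.
by [].
Qed.


Lemma eqscale (X Y X' Y' K : F) : K != 0 -> X = X' * K -> Y = Y' * K -> (X = Y <-> X' = Y').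
Proof. by move=> K0 -> ->; split => [/(mulIf K0)|->]. Qed.

Lemma eqnE (al be v a b : F) : b != 0 ->
  (al * a ^+ (q0 + 1) + be * b ^+ (q0 + 1) + b ^+ (q0 + 1) + a ^+ q0 * b = v * (a + b) ^+ (q0 + 1)) <->
  (al * (a / b) ^+ q0 * (a / b) + be + 1 + (a / b) ^+ q0 = v * ((a / b) ^+ q0 + 1) * (a / b + 1)).
Proof.
move=> b0; have ab : a = (a / b) * b by rewrite divfK.
move: (a / b) ab => t ->.
have K : b ^+ q0 * b != 0 by rewrite mulf_neq0 ?expf_neq0.
apply: (eqscale _ _ _ _ _ K); rewrite addn1 !exprSr ?frob !exprMn; ring.
Qed.

Lemma nzE (a b : F) : b != 0 -> (a + b != 0) = (a / b + 1 != 0).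
Proof.
move=> b0; have -> : a + b = (a / b + 1) * b by rewrite mulrDl divfK // mul1r.
by rewrite mulf_eq0 (negbTE b0) orbF.
Qed.

Lemma and_iff {P : bool} {A B : Prop} : (P -> (A <-> B)) -> (P /\ A <-> P /\ B).
Proof. by move=> h; split => -[p x]; split => //; apply/(h p). Qed.

Lemma one_r : 1 + r != 0.
Proof.
apply/eqP => E; move/eqP: rn1; apply.
have h : 1 + r = 0 <-> r = 1 by apply: (ch2 (K := 0)); ring.
by apply/h.
Qed.

Lemma case1 (a b : F) : a != 0 -> b != 0 ->
  arrow q0 u (Phi q0 a (u * a ^+ (q0 + 1))) (Phi q0 b (u * b ^+ (q0 + 1))) <-> a / b = 1 + r.
Proof.
move=> a0 b0; rewrite arrowP (nzE _ _ b0) eqnE //.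
have t0 : a / b != 0 by rewrite mulf_neq0 ?invr_neq0.
move: (a / b) t0 => t t0.
rewrite (ch2 (Z := (u + 1) * (t + 1) ^+ q0) (W := u * (t + 1)) (K := u * t ^+ q0 * t)); last first.
  by rewrite frob expr1n; ring.
rewrite stdP'; apply: (ch2 (K := 0)); ring.
Qed.

Lemma case2 (a b : F) : a != 0 -> b != 0 ->
  arrow q0 (u + 1) (Phi q0 a (u * a ^+ (q0 + 1))) (Phi q0 b (u * b ^+ (q0 + 1))) <-> a / b = (1 + r)^-1.
Proof.
move=> a0 b0; rewrite arrowP (nzE _ _ b0) eqnE //.
have t0 : a / b != 0 by rewrite mulf_neq0 ?invr_neq0.
move: (a / b) t0 => t t0.
rewrite (ch2 (Z := (u + 1) * (1 + t) ^+ q0 * t) (W := u * (1 + t) * t ^+ q0) (K := u + t ^+ q0 + 1)); last first.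
  by rewrite frob expr1n; ring.
have -> : (t + 1 != 0) = ((1 + t) / t != 0) by rewrite mulf_eq0 invr_eq0 (negbTE t0) orbF addrC.
rewrite -(stdfrac _ _ t0) stdP' (mulK_iff _ _ _ t0) divfK //.
rewrite (mulK_iff t _ _ one_r) mulVf ?one_r //.
apply: (ch2 (K := 0)); ring.
Qed.

Lemma case3 (a b : F) : a != 0 -> b != 0 ->
  arrow q0 u (Phi q0 a ((u + 1) * a ^+ (q0 + 1))) (Phi q0 b ((u + 1) * b ^+ (q0 + 1))) <-> a / b = r / (1 + r).
Proof.
move=> a0 b0; rewrite arrowP (nzE _ _ b0) eqnE //.
have t0 : a / b != 0 by rewrite mulf_neq0 ?invr_neq0.
move: (a / b) t0 => t t0.
have -> : (t + 1 != 0) = (t / (1 + t) != 0) by rewrite mulf_eq0 invr_eq0 (negbTE t0) /= addrC.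
rewrite (and_iff (B := (u + 1) * (t / (1 + t)) ^+ q0 = u * (t / (1 + t)))); last first.
  move=> nz; have nz' : 1 + t != 0 by move: nz; rewrite mulf_eq0 invr_eq0 negb_or => /andP [].
  rewrite (stdfrac _ _ nz').
  by apply: (ch2 (K := u + 1)); rewrite frob expr1n; ring.
rewrite stdP'.
have [t1|t1] := eqVneq (1 + t) 0.
  rewrite t1 invr0 mulr0; split => [E|E]; first by move: r0; rewrite -E eqxx.
  have : (1 + t) * (1 + r) = 1.
    by rewrite E mulrDl divfK ?one_r // mul1r -addrA addxx addr0.
  by rewrite t1 mul0r => /eqP; rewrite eq_sym oner_eq0.
rewrite (mulK_iff _ _ _ t1) (divfK t1) (mulK_iff t (r / (1 + r)) _ one_r) (divfK one_r).
apply: (ch2 (K := 0)); ring.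
Qed.

Lemma case4 (a b : F) : a != 0 -> b != 0 ->
  arrow q0 (u + 1) (Phi q0 a ((u + 1) * a ^+ (q0 + 1))) (Phi q0 b ((u + 1) * b ^+ (q0 + 1))) <-> a / b = (1 + r) / r.
Proof.
move=> a0 b0; rewrite arrowP (nzE _ _ b0) eqnE //.
have t0 : a / b != 0 by rewrite mulf_neq0 ?invr_neq0.
move: (a / b) t0 => t t0.
have -> : (t + 1 != 0) = (1 / (t + 1) != 0) by rewrite mulf_eq0 invr_eq0 oner_eq0.
rewrite (and_iff (B := (u + 1) * (1 / (t + 1)) ^+ q0 = u * (1 / (t + 1)))); last first.
  move=> nz; have nz' : t + 1 != 0 by move: nz; rewrite mulf_eq0 invr_eq0 negb_or => /andP [].
  rewrite (stdfrac _ _ nz').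
  by apply: (ch2 (K := u * t ^+ q0 * t + t ^+ q0 * t + 1 + t ^+ q0)); rewrite frob !expr1n; ring.
rewrite stdP'.
have [t1|t1] := eqVneq (t + 1) 0.
  rewrite t1 invr0 mulr0; split => [E|E]; first by move: r0; rewrite -E eqxx.
  have : (t + 1) * r = 1.
    by rewrite E mulrDl (divfK r0) mul1r -addrA addxx addr0.
  by rewrite t1 mul0r => /eqP; rewrite eq_sym oner_eq0.
rewrite (mulK_iff _ _ _ t1) (divfK t1) (mulK_iff t ((1 + r) / r) _ r0) (divfK r0).
apply: (ch2 (K := 0)); ring.
Qed.

Lemma case5 (a b : F) : a != 0 -> b != 0 ->
  arrow q0 u (Phi q0 a (u * a ^+ (q0 + 1))) (Phi q0 b ((u + 1) * b ^+ (q0 + 1))) <-> a / b = r.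
Proof.
move=> a0 b0; rewrite arrowP (nzE _ _ b0) eqnE //.
have t0 : a / b != 0 by rewrite mulf_neq0 ?invr_neq0.
move: (a / b) t0 => t t0.
rewrite (ch2 (Z := (u + 1) * t ^+ q0) (W := u * t) (K := u * t ^+ q0 * t + u + 1)); last first.
  by ring.
split => [[_ /(stdP _ t0)] // | E].
split; last by apply/(stdP _ t0).
by rewrite E addrC one_r.
Qed.

Lemma case6 (a b : F) : a != 0 -> b != 0 ->
  arrow q0 (u + 1) (Phi q0 a (u * a ^+ (q0 + 1))) (Phi q0 b ((u + 1) * b ^+ (q0 + 1))) <->
  (a / b) ^+ (q0 + 1) + u * (a / b) ^+ q0 + (u + 1) * (a / b) + 1 = 0.
Proof.
move=> a0 b0; rewrite arrowP (nzE _ _ b0) eqnE //.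
move: (a / b) => t.
rewrite addn1 exprSr.
rewrite (ch2 (Z := t ^+ q0 * t + u * t ^+ q0 + (u + 1) * t + 1) (W := 0) (K := u * t ^+ q0 * t + u + 1 + t ^+ q0)); last first.
  by ring.
split => [[] // | h]; split => //.
apply/eqP => e.
have t1 : t = 1.
  have hh : t + 1 = 0 <-> t = 1 by apply: (ch2 (K := 0)); ring.
  by apply/hh.
move: h; rewrite t1 expr1n => h.
have : (1 : F) = 0.
  rewrite -h; have -> : 1 * 1 + u * 1 + (u + 1) * 1 + 1 = 1 + 2 * (u + 1) by ring.
  by rewrite two0 mul0r addr0.
by move/eqP; rewrite oner_eq0.
Qed.

End C.

Lemma divE (F : finFieldType) (a b c : F) : a != 0 -> b != 0 -> c != 0 ->
  (b = a * c <-> a / b = c^-1).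
Proof.
move=> a0 b0 c0; split => [->|E]; first by rewrite invfM mulrA mulfV // mul1r.
have h : a = c^-1 * b by rewrite -E divfK.
by rewrite [a]h mulrAC mulVf // mul1r.
Qed.

Lemma frob2 (F : finFieldType) : (2 : F) = 0 -> forall e (x y : F),
  (x + y) ^+ (2 ^ e) = x ^+ (2 ^ e) + y ^+ (2 ^ e).
Proof.
move=> two0; elim=> [|e IH] x y; first by rewrite !expr1.
rewrite expnSr !exprM IH sqrrD -mulr_natr.
have -> : (2%:R : F) = 2 by [].
by rewrite two0 mulr0 addr0.
Qed.

Theorem lemma6p1 (F : finFieldType) (f q0 : nat) :
  (4 <= f)%N -> #|F| = (2 ^ f)%N ->
  (exists e : nat, q0 = (2 ^ e)%N) -> (q0 < 2 ^ f)%N ->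
  coprime (2 ^ f - 1) (q0 ^ 2 - 1) ->
  forall u : F, u != 0 -> u != 1 ->
  let eta := 1 + root_pow (q0 - 1) (u / (u + 1)) in
  forall a b : F, a != 0 -> b != 0 ->
  (arrow q0 u (Phi q0 a (u * a ^+ (q0 + 1))) (Phi q0 b (u * b ^+ (q0 + 1)))
     <-> b = a / eta) /\
  (arrow q0 (u + 1) (Phi q0 a (u * a ^+ (q0 + 1))) (Phi q0 b (u * b ^+ (q0 + 1)))
     <-> b = a * eta) /\
  (arrow q0 u (Phi q0 a ((u + 1) * a ^+ (q0 + 1))) (Phi q0 b ((u + 1) * b ^+ (q0 + 1)))
     <-> b = a * (eta / (1 + eta))) /\
  (arrow q0 (u + 1) (Phi q0 a ((u + 1) * a ^+ (q0 + 1))) (Phi q0 b ((u + 1) * b ^+ (q0 + 1)))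
     <-> b = a * ((1 + eta) / eta)) /\
  (arrow q0 u (Phi q0 a (u * a ^+ (q0 + 1))) (Phi q0 b ((u + 1) * b ^+ (q0 + 1)))
     <-> b = a / (1 + eta)) /\
  (arrow q0 (u + 1) (Phi q0 a (u * a ^+ (q0 + 1))) (Phi q0 b ((u + 1) * b ^+ (q0 + 1)))
     <-> (a / b) ^+ (q0 + 1) + u * (a / b) ^+ q0 + (u + 1) * (a / b) + 1 = 0).
Proof.
move=> f4 cardF [e q0e] q0lt co u u0 u1n eta a b a0 b0.
have two0 : (2 : F) = 0.
  have := card_finPcharP cardF (isT : prime 2); exact: pcharf0.
have frob : forall x y : F, (x + y) ^+ q0 = x ^+ q0 + y ^+ q0.
  by rewrite q0e; exact: frob2.
have f16 : (2 ^ 4 <= 2 ^ f)%N by rewrite leq_exp2l.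
have q1 : (1 < q0)%N.
  case: e q0e => [|e] q0e; last first. { rewrite q0e expnS. have : (0 < 2 ^ e)%N by rewrite expn_gt0. lia. }
  move: co; rewrite q0e /coprime expn0 exp1n subnn gcdn0 => /eqP h.
  by move: f16 h; set m := (2 ^ f)%N; lia.
have co' : coprime (q0 - 1) (#|F|.-1).
  rewrite cardF -subn1 coprime_sym; apply: coprime_dvdr co.
  have -> : (q0 ^ 2 - 1 = q0 ^ 2 - 1 ^ 2)%N by rewrite exp1n.
  by rewrite subn_sqr dvdn_mulr.
have u1 : u + 1 != 0.
  apply/eqP => h; move/eqP: u1n; apply.
  by rewrite -[u]addr0 -(@addxx F two0 1) addrA h add0r.
set r := root_pow (q0 - 1) (u / (u + 1)).
have rootP : forall y, y ^+ (q0 - 1) = u / (u + 1) <-> y = r.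
  by move=> y; apply: root_powP => //; rewrite subn_gt0.
have r0 : r != 0 by apply: r0 q1 _ _ u0 u1 rootP.
have one_r : 1 + r != 0 by apply: one_r two0 _ _ u1 rootP.
have eta0 : eta != 0 by [].
have etar : 1 + eta = r by rewrite /eta addrA (@addxx F two0) add0r.
rewrite /eta in eta0 etar *.
split.
  rewrite divE ?invr_eq0 // invrK; apply: case1 => //.
split.
  rewrite divE //; apply: case2 => //.
split.
  rewrite etar divE ?mulf_neq0 ?invr_eq0 // invfM invrK [X in a / b = X]mulrC.
  apply: case3 => //.
split.
  rewrite etar divE ?mulf_neq0 ?invr_eq0 // invfM invrK [X in a / b = X]mulrC.
  apply: case4 => //.
split.
  rewrite etar divE ?invr_eq0 // invrK; apply: case5 => //.
apply: case6 => //.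
Qed.
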